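(* Let $\mathcal{A}$ be a unital $*$-algebra (a unital $*$-subalgebra of $\mathcal{B}(\mathbf{h})$ for a Hilbert space $\mathbf{h}$), let $\mathcal{L}:\mathcal{A}\to\mathcal{A}$ be a conditionally completely positive map with $\mathcal{L}(1)=0$, and let $(M,\pi,\delta)$ be its canonical pre-Hilbert $\mathcal{A}$-$\mathcal{A}$ bimodule, left-action $*$-representation $\pi:\mathcal{A}\to\mathcal{B}^a(M)$ and bimodule derivation $\delta:\mathcal{A}\to M$, as described in the context. Let $E_{\mathcal{L}}=\mathcal{B}^a(\mathcal{A}\oplus M)$ with the $\mathcal{A}$-$\mathcal{A}$ bimodule structure $x.R=\tilde\pi(x)R$, $R.x=R\tilde\pi(x)$, where $\tilde\pi(x)=x\oplus\pi(x)$. If the second Hochschild cohomology $H^2(\mathcal{A},E_{\mathcal{L}})$ vanishes, then there exists a $*$-homomorphism $\beta:\mathcal{A}\to E_{\mathcal{L}}[[t]]$ which, writing $h=t^2$ (so $h^{\frac{2n-1}{2}}=t^{2n-1}$) and $$\beta(x)=\begin{pmatrix}\beta_{00}(h)(x) & \beta_{01}(h)(x)\\ \beta_{10}(h)(x) & \beta_{11}(h)(x)\end{pmatrix}$$ in the matrix decomposition of $E_{\mathcal{L}}$, has the form - $\beta_{00}(h)=\sum_{n\ge 0}h^n\theta_{00}^{(n)}$ with $\theta_{00}^{(0)}(x)=x$ and $\theta_{00}^{(1)}(x)=\mathcal{L}(x)$, - $\beta_{10}(h)=\sum_{n\ge 1}h^{\frac{2n-1}{2}}\theta_{10}^{(n)}$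 with $\theta_{10}^{(1)}(x)=\delta(x)$, - $\beta_{01}(h)=\sum_{n\ge 1}h^{\frac{2n-1}{2}}\theta_{01}^{(n)}$ with $\theta_{01}^{(1)}(x)=\delta^\dagger(x)$, - $\beta_{11}(h)=\sum_{n\ge 1}h^{n-1}\theta_{11}^{(n)}$ with $\theta_{11}^{(1)}(x)=\pi(x)$, for some linear maps $\theta_{\mu\nu}^{(n)}$ on $\mathcal{A}$.
   Context: A linear map $\mathcal{L}$ on $\mathcal{A}$ with $\mathcal{L}(1)=0$ that is conditionally completely positive admits a canonical (unique up to isomorphism) pre-Hilbert $\mathcal{A}$-$\mathcal{A}$ bimodule $M$ with $\mathcal{A}$-valued inner product $\langle\cdot,\cdot\rangle$, whose left action is given by a $*$-representation $\pi$ of $\mathcal{A}$ into the algebra $\mathcal{B}^a(M)$ of adjointable maps on $M$, together with a bimodule derivation $\delta:\mathcal{A}\to M$ (i.e. $\delta(xy)=\pi(x)\delta(y)+\delta(x)y$) such that $M$ is the right $\mathcal{A}$-linear span of $\delta(\mathcal{A})$ and $\mathcal{L}(xy)-x\mathcal{L}(y)-\mathcal{L}(x)y=\delta^\dagger(x)\delta(y)$ for all $x,y\in\mathcal{A}$. Here for a linear map $\psi$, $\psi^\dagger(x):=(\psi(x^* ))^*$, and an element $\xi\in M$ is identified with the adjoint map $\xi^*=\langle\xi|:M\to\mathcal{A}$, $\eta\mapsto\langle\xi,\eta\rangle$; $M^*=\{\xi^*:\xi\in M\}$. The $*$-algebra $E_{\mathcal{L}}=\mathcal{B}^a(\mathcal{A}\oplus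 M)$ (product = composition, $*$ = adjoint) is the direct sum of the complemented submodules $\mathcal{A}$, $M^*$, $M$, $\mathcal{B}^a(M)$, and each $X\in E_{\mathcal{L}}$ is written as a $2\times 2$ matrix whose $(0,0)$ entry lies in $\mathcal{A}$, $(0,1)$ entry in $M^*$, $(1,0)$ entry in $M$, and $(1,1)$ entry in $\mathcal{B}^a(M)$. $H^n(\mathcal{A},N)$ is the Hochschild cohomology of $\mathcal{A}$ with coefficients in the bimodule $N$: the cohomology of the complex $C^0=N$, $C^n$ = multilinear maps $\mathcal{A}^n\to N$, with the standard Hochschild coboundary $bf(a_1,\dots,a_{n+1})=a_1f(a_2,\dots,a_{n+1})+\sum_{i=1}^{n}(-1)^i f(a_1,\dots,a_ia_{i+1},\dots,a_{n+1})+(-1)^{n+1}f(a_1,\dots,a_n)a_{n+1}$. For a $*$-algebra $\mathcal{C}$, $\mathcal{C}[[t]]$ denotes the $*$-algebra of formal power series in one indeterminate $t$ with coefficients in $\mathcal{C}$; a $*$-homomorphism $\beta:\mathcal{A}\to E_{\mathcal{L}}[[t]]$ means $\beta(xy)=\beta(x)\beta(y)$ and $\beta(x^* )=\beta(x)^*$. *)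

(* Defs.v *)
From HB Require Import structures.
From mathcomp Require Import all_boot all_order all_algebra.
From mathcomp Require Import complex.
From mathcomp Require Import reals.
Set Implicit Arguments. Unset Strict Implicit. Unset Printing Implicit Defensive.
Import Order.TTheory GRing.Theory Num.Theory.
Local Open Scope ring_scope.

Definition is_involution (R : realType) (A : algType R[i]) (star : A -> A) :=
  (forall x y, star (x + y) = star x + star y) /\
  (forall (c : R[i]) x, star (c *: x) = c^* *: star x) /\
  (forall x y, star (x * y) = star y * star x) /\
  (forall x, star (star x) = x) /\
  (star 1 = 1).

Definition is_inner_product (R : realType) (H : lmodType R[i])
    (ipH : H -> H -> R[i]) :=
  (forall u v w, ipH u (v + w) = ipH u v + ipH u w) /\
  (forall u (c : R[i]) v, ipH u (c *: v) = c * ipH u v) /\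
  (forall u v, ipH v u = (ipH u v)^*) /\
  (forall u, 0 <= ipH u u) /\
  (forall u, ipH u u = 0 -> u = 0).

(* rho : A -> B(H) is an injective unital *-homomorphism into the bounded
   adjointable linear operators on H, i.e. A "is" a unital *-subalgebra of
   B(H). *)
Definition is_faithful_bounded_star_rep (R : realType) (A : algType R[i])
    (star : A -> A) (H : lmodType R[i]) (ipH : H -> H -> R[i])
    (rho : A -> H -> H) :=
  (forall x u v, rho x (u + v) = rho x u + rho x v) /\
  (forall x (c : R[i]) u, rho x (c *: u) = c *: rho x u) /\
  (forall x y u, rho (x + y) u = rho x u + rho y u) /\
  (forall (c : R[i]) x u, rho (c *: x) u = c *: rho x u) /\
  (forall x y u, rho (x * y) u = rho x (rho y u)) /\
  (forall u, rho 1 u = u) /\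
  (forall x u v, ipH (rho x u) v = ipH u (rho (star x) v)) /\
  (forall x, exists c : R[i], forall u,
      ipH (rho x u) (rho x u) <= c * ipH u u) /\
  (forall x y, (forall u, rho x u = rho y u) -> x = y).

Definition posA (R : realType) (A : algType R[i]) (H : lmodType R[i])
    (ipH : H -> H -> R[i]) (rho : A -> H -> H) (a : A) :=
  forall u, 0 <= ipH u (rho a u).

Definition linear_on (R : realType) (A : algType R[i]) (V : lmodType R[i])
    (f : A -> V) :=
  (forall x y, f (x + y) = f x + f y) /\
  (forall (c : R[i]) x, f (c *: x) = c *: f x).

Definition linear_on_fun (R : realType) (A : algType R[i]) (V : Type)
    (W : lmodType R[i]) (f : A -> V -> W) :=
  (forall x y v, f (x + y) v = f x v + f y v) /\
  (forall (c : R[i]) x v, f (c *: x) v = c *: f x v).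

Definition cond_completely_positive (R : realType) (A : algType R[i])
    (star : A -> A) (H : lmodType R[i]) (ipH : H -> H -> R[i])
    (rho : A -> H -> H) (L : A -> A) :=
  (forall x, L (star x) = star (L x)) /\
  (forall (n : nat) (xs ys : 'I_n -> A),
      \sum_(i < n) xs i * ys i = 0 ->
      posA ipH rho
        (\sum_(i < n) \sum_(j < n) star (ys i) * L (star (xs i) * xs j) * ys j)).

Definition is_preHilbert_module (R : realType) (A : algType R[i])
    (star : A -> A) (H : lmodType R[i]) (ipH : H -> H -> R[i])
    (rho : A -> H -> H) (M : lmodType R[i]) (ract : M -> A -> M)
    (ipM : M -> M -> A) :=
  (forall xi eta a, ract (xi + eta) a = ract xi a + ract eta a) /\
  (forall xi a b, ract xi (a + b) = ract xi a + ract xi b) /\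
  (forall (c : R[i]) xi a, ract (c *: xi) a = c *: ract xi a) /\
  (forall (c : R[i]) xi a, ract xi (c *: a) = c *: ract xi a) /\
  (forall xi a b, ract xi (a * b) = ract (ract xi a) b) /\
  (forall xi, ract xi 1 = xi) /\
  (forall xi eta zeta, ipM xi (eta + zeta) = ipM xi eta + ipM xi zeta) /\
  (forall xi (c : R[i]) eta, ipM xi (c *: eta) = c *: ipM xi eta) /\
  (forall xi eta a, ipM xi (ract eta a) = ipM xi eta * a) /\
  (forall xi eta, ipM eta xi = star (ipM xi eta)) /\
  (forall xi, posA ipH rho (ipM xi xi)) /\
  (forall xi, ipM xi xi = 0 -> xi = 0).

Definition is_left_action (R : realType) (A : algType R[i])
    (star : A -> A) (M : lmodType R[i]) (ract : M -> A -> M)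
    (ipM : M -> M -> A) (pi : A -> M -> M) :=
  (forall x xi eta, pi x (xi + eta) = pi x xi + pi x eta) /\
  (forall x (c : R[i]) xi, pi x (c *: xi) = c *: pi x xi) /\
  (forall x xi a, pi x (ract xi a) = ract (pi x xi) a) /\
  (forall x y xi, pi (x + y) xi = pi x xi + pi y xi) /\
  (forall (c : R[i]) x xi, pi (c *: x) xi = c *: pi x xi) /\
  (forall x y xi, pi (x * y) xi = pi x (pi y xi)) /\
  (forall xi, pi 1 xi = xi) /\
  (forall x xi eta, ipM (pi x xi) eta = ipM xi (pi (star x) eta)).

Definition is_generating_derivation (R : realType) (A : algType R[i])
    (M : lmodType R[i]) (ract : M -> A -> M) (pi : A -> M -> M)
    (delta : A -> M) :=
  linear_on delta /\
  (forall x y, delta (x * y) = pi x (delta y) + ract (delta x) y) /\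
  (forall xi, exists (n : nat) (as_ bs : 'I_n -> A),
      xi = \sum_(i < n) ract (delta (as_ i)) (bs i)).

(* E_L = B^a(A (+) M).  Elements of A (+) M are pairs; the A-valued inner    *)
(* adjointable maps; product = composition, * = adjoint.                    *)

Definition ipE (R : realType) (A : algType R[i]) (star : A -> A)
    (M : lmodType R[i]) (ipM : M -> M -> A) (u v : A * M) : A :=
  star u.1 * v.1 + ipM u.2 v.2.

Definition adjointable (R : realType) (A : algType R[i]) (star : A -> A)
    (M : lmodType R[i]) (ipM : M -> M -> A) (T : A * M -> A * M) :=
  exists S : A * M -> A * M,
    forall u v, ipE star ipM (T u) v = ipE star ipM u (S v).

Definition pit (R : realType) (A : algType R[i]) (M : lmodType R[i])
    (pi : A -> M -> M) (x : A) (u : A * M) : A * M :=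
  (x * u.1, pi x u.2).

Definition entry00 (R : realType) (A : algType R[i]) (M : lmodType R[i])
    (T : A * M -> A * M) : A := (T (1, 0)).1.
Definition entry10 (R : realType) (A : algType R[i]) (M : lmodType R[i])
    (T : A * M -> A * M) : M := (T (1, 0)).2.
Definition entry01 (R : realType) (A : algType R[i]) (M : lmodType R[i])
    (T : A * M -> A * M) : M -> A := fun xi => (T (0, xi)).1.
Definition entry11 (R : realType) (A : algType R[i]) (M : lmodType R[i])
    (T : A * M -> A * M) : M -> M := fun xi => (T (0, xi)).2.

Definition H2_vanishes (R : realType) (A : algType R[i]) (star : A -> A)
    (M : lmodType R[i]) (ipM : M -> M -> A) (pi : A -> M -> M) :=
  forall f : A -> A -> (A * M -> A * M),
    (forall x y, adjointable star ipM (f x y)) ->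
    (forall x1 x2 y u, f (x1 + x2) y u = f x1 y u + f x2 y u) ->
    (forall (c : R[i]) x y u, f (c *: x) y u = c *: f x y u) ->
    (forall x y1 y2 u, f x (y1 + y2) u = f x y1 u + f x y2 u) ->
    (forall (c : R[i]) x y u, f x (c *: y) u = c *: f x y u) ->
    (forall x y z u,
        pit pi x (f y z u) - f (x * y) z u + f x (y * z) u
        - f x y (pit pi z u) = 0) ->
    exists g : A -> (A * M -> A * M),
      (forall x, adjointable star ipM (g x)) /\
      (forall x1 x2 u, g (x1 + x2) u = g x1 u + g x2 u) /\
      (forall (c : R[i]) x u, g (c *: x) u = c *: g x u) /\
      (forall x y u,
          f x y u = pit pi x (g y u) - g (x * y) u + g x (pit pi y u)).

(* beta = sum_n t^n beta_n : A -> E_L[[t]] is a *-homomorphism: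
   beta(xy) = beta(x) beta(y) (Cauchy product, composition in E_L) and
   beta(x^* ) = beta(x)^* (coefficientwise adjoint in E_L). *)
Definition star_hom_series (R : realType) (A : algType R[i]) (star : A -> A)
    (M : lmodType R[i]) (ipM : M -> M -> A)
    (beta : nat -> A -> (A * M -> A * M)) :=
  (forall n x y u,
      beta n (x * y) u = \sum_(k < n.+1) beta k x (beta (n - k)%N y u)) /\
  (forall n x u v,
      ipE star ipM (beta n x u) v = ipE star ipM u (beta n (star x) v)).

(* Main.v *)
Require Import Defs.
From HB Require Import structures.
From mathcomp Require Import all_boot all_order all_algebra.
From mathcomp Require Import complex.
From mathcomp Require Import reals.
From Stdlib Require Import ClassicalEpsilon.
Import Order.TTheory GRing.Theory Num.Theory.
Local Open Scope ring_scope.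
Set Implicit Arguments. Unset Strict Implicit. Unset Printing Implicit Defensive.

Section Main.
Variables (R : realType) (A : algType R[i]) (star : A -> A)
    (H : lmodType R[i]) (ipH : H -> H -> R[i]) (rho : A -> H -> H)
    (L : A -> A)
    (M : lmodType R[i]) (ract : M -> A -> M) (ipM : M -> M -> A)
    (pi : A -> M -> M) (delta : A -> M).
Hypothesis Hinv : is_involution star.
Hypothesis HPH : is_preHilbert_module star ipH rho ract ipM.
Hypothesis Hleft : is_left_action star ract ipM pi.
Hypothesis Hgen : is_generating_derivation ract pi delta.
Hypothesis HL : linear_on L.
Hypothesis HLs : forall x, L (star x) = star (L x).
Hypothesis HLd : forall x y, L (x * y) - x * L y - L x * y = ipM (delta (star x)) (delta y).
Hypothesis HH2 : H2_vanishes star ipM pi.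

Lemma sD x y : star (x + y) = star x + star y. Proof. by case: Hinv. Qed.
Lemma sZ c x : star (c *: x) = c^* *: star x. Proof. by case: Hinv => _ []. Qed.
Lemma sM x y : star (x * y) = star y * star x. Proof. by case: Hinv => _ [_ []]. Qed.
Lemma sK x : star (star x) = x. Proof. by case: Hinv => _ [_ [_ []]]. Qed.
Lemma s1 : star 1 = 1. Proof. by case: Hinv => _ [_ [_ []]]. Qed.
Lemma s0 : star 0 = 0.
Proof. by apply: (addrI (star 0)); rewrite -sD !addr0. Qed.
Lemma sN x : star (- x) = - star x.
Proof. by apply: (addrI (star x)); rewrite -sD !subrr s0. Qed.
Lemma sB x y : star (x - y) = star x - star y.
Proof. by rewrite sD sN. Qed.

Lemma rDl xi eta a : ract (xi + eta) a = ract xi a + ract eta a. Proof. by case: HPH. Qed.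
Lemma rDr xi a b : ract xi (a + b) = ract xi a + ract xi b. Proof. by case: HPH => _ []. Qed.
Lemma rM xi a b : ract xi (a * b) = ract (ract xi a) b.
Proof. by case: HPH => _ [_ [_ [_ []]]]. Qed.
Lemma r1 xi : ract xi 1 = xi. Proof. by case: HPH => _ [_ [_ [_ [_ []]]]]. Qed.
Lemma iDr xi eta zeta : ipM xi (eta + zeta) = ipM xi eta + ipM xi zeta.
Proof. by case: HPH => _ [_ [_ [_ [_ [_ []]]]]]. Qed.
Lemma iZr xi c eta : ipM xi (c *: eta) = c *: ipM xi eta.
Proof. by case: HPH => _ [_ [_ [_ [_ [_ [_ []]]]]]]. Qed.
Lemma iRr xi eta a : ipM xi (ract eta a) = ipM xi eta * a.
Proof. by case: HPH => _ [_ [_ [_ [_ [_ [_ [_ []]]]]]]]. Qed.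
Lemma iS xi eta : ipM eta xi = star (ipM xi eta).
Proof. by case: HPH => _ [_ [_ [_ [_ [_ [_ [_ [_ []]]]]]]]]. Qed.
Lemma idef xi : ipM xi xi = 0 -> xi = 0.
Proof. have [_ [_ [_ [_ [_ [_ [_ [_ [_ [_ [_ h]]]]]]]]]]] := HPH; exact: h. Qed.

Lemma r0l a : ract 0 a = 0.
Proof. by apply: (addrI (ract 0 a)); rewrite -rDl !addr0. Qed.
Lemma r0r xi : ract xi 0 = 0.
Proof. by apply: (addrI (ract xi 0)); rewrite -rDr !addr0. Qed.
Lemma i0r xi : ipM xi 0 = 0.
Proof. by apply: (addrI (ipM xi 0)); rewrite -iDr !addr0. Qed.
Lemma iNr xi eta : ipM xi (- eta) = - ipM xi eta.
Proof. by apply: (addrI (ipM xi eta)); rewrite -iDr !subrr i0r. Qed.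
Lemma iDl xi eta zeta : ipM (xi + eta) zeta = ipM xi zeta + ipM eta zeta.
Proof. by rewrite iS iDr sD -!iS. Qed.
Lemma i0l xi : ipM 0 xi = 0.
Proof. by rewrite iS i0r s0. Qed.
Lemma iNl xi eta : ipM (- xi) eta = - ipM xi eta.
Proof. by rewrite iS iNr sN -iS. Qed.
Lemma iZl c xi eta : ipM (c *: xi) eta = c^* *: ipM xi eta.
Proof. by rewrite iS iZr sZ -iS. Qed.
Lemma iRl xi eta a : ipM (ract xi a) eta = star a * ipM xi eta.
Proof. by rewrite iS iRr sM -iS. Qed.

Lemma pDr x xi eta : pi x (xi + eta) = pi x xi + pi x eta. Proof. by case: Hleft. Qed.
Lemma pZr x c xi : pi x (c *: xi) = c *: pi x xi. Proof. by case: Hleft => _ []. Qed.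
Lemma pR x xi a : pi x (ract xi a) = ract (pi x xi) a. Proof. by case: Hleft => _ [_ []]. Qed.
Lemma pDl x y xi : pi (x + y) xi = pi x xi + pi y xi. Proof. by case: Hleft => _ [_ [_ []]]. Qed.
Lemma pZl c x xi : pi (c *: x) xi = c *: pi x xi. Proof. by case: Hleft => _ [_ [_ [_ []]]]. Qed.
Lemma pM x y xi : pi (x * y) xi = pi x (pi y xi). Proof. by case: Hleft => _ [_ [_ [_ [_ []]]]]. Qed.
Lemma pA x xi eta : ipM (pi x xi) eta = ipM xi (pi (star x) eta).
Proof. by case: Hleft => _ [_ [_ [_ [_ [_ [_ ]]]]]]. Qed.
Lemma p0 x : pi x 0 = 0.
Proof. by apply: (addrI (pi x 0)); rewrite -pDr !addr0. Qed.
Lemma pN x xi : pi x (- xi) = - pi x xi.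
Proof. by apply: (addrI (pi x xi)); rewrite -pDr !subrr p0. Qed.

Lemma dD x y : delta (x + y) = delta x + delta y. Proof. by case: Hgen => [[]]. Qed.
Lemma dZ c x : delta (c *: x) = c *: delta x. Proof. by case: Hgen => [[]]. Qed.
Lemma dL x y : delta (x * y) = pi x (delta y) + ract (delta x) y.
Proof. by case: Hgen => _ []. Qed.
Lemma LD x y : L (x + y) = L x + L y. Proof. by case: HL. Qed.
Lemma LZ c x : L (c *: x) = c *: L x. Proof. by case: HL. Qed.


Local Notation ip := (ipE star ipM).
Local Notation pt := (pit pi).

Lemma peq (u v : A * M) : u.1 = v.1 -> u.2 = v.2 -> u = v.
Proof. by case: u v => ? ? [? ?] /= -> ->. Qed.

Lemma eDr u v w : ip u (v + w) = ip u v + ip u w.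
Proof. by rewrite /ipE /= mulrDr iDr addrACA. Qed.
Lemma eDl u v w : ip (u + v) w = ip u w + ip v w.
Proof. by rewrite /ipE /= sD mulrDl iDl addrACA. Qed.
Lemma eZr u c v : ip u (c *: v) = c *: ip u v.
Proof. by rewrite /ipE /= iZr -scalerAr scalerDr. Qed.
Lemma eZl c u v : ip (c *: u) v = c^* *: ip u v.
Proof. by rewrite /ipE /= iZl sZ -scalerAl scalerDr. Qed.
Lemma e0r u : ip u 0 = 0.
Proof. by apply: (addrI (ip u 0)); rewrite -eDr !addr0. Qed.
Lemma e0l u : ip 0 u = 0.
Proof. by apply: (addrI (ip 0 u)); rewrite -eDl !addr0. Qed.
Lemma eNr u v : ip u (- v) = - ip u v.
Proof. by apply: (addrI (ip u v)); rewrite -eDr !subrr e0r. Qed.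
Lemma eNl u v : ip (- u) v = - ip u v.
Proof. by apply: (addrI (ip u v)); rewrite -eDl !subrr e0l. Qed.
Lemma esym u v : ip v u = star (ip u v).
Proof. by rewrite /ipE sD sM sK -iS. Qed.
Lemma e_sumr u I (r : seq I) (P : pred I) (F : I -> A * M) :
  ip u (\sum_(i <- r | P i) F i) = \sum_(i <- r | P i) ip u (F i).
Proof. by apply: (big_morph _ (eDr u) (e0r u)). Qed.
Lemma e_suml u I (r : seq I) (P : pred I) (F : I -> A * M) :
  ip (\sum_(i <- r | P i) F i) u = \sum_(i <- r | P i) ip (F i) u.
Proof. by apply: (big_morph (fun v => ip v u) (fun a b => eDl a b u) (e0l u)). Qed.

Definition rmul (u : A * M) (b : A) : A * M := (u.1 * b, ract u.2 b).
Lemma eRr u v b : ip u (rmul v b) = ip u v * b.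
Proof. by rewrite /ipE /= iRr mulrDl mulrA. Qed.
Lemma eRl u v b : ip (rmul u b) v = star b * ip u v.
Proof. by rewrite /ipE /= iRl sM mulrDr !mulrA. Qed.

Lemma nondeg v1 v2 : (forall w, ip w v1 = ip w v2) -> v1 = v2.
Proof.
move=> h; have h1 := h (1, 0); rewrite /ipE /= s1 !mul1r !i0l !addr0 in h1.
apply: peq => //.
have h2 := h (0, v1.2 - v2.2); rewrite /ipE /= s0 !mul0r !add0r in h2.
apply/eqP; rewrite -subr_eq0; apply/eqP/idef.
by rewrite iDr iNr h2 -iNr -iDr subrr i0r.
Qed.
Lemma nondegl v1 v2 : (forall w, ip v1 w = ip v2 w) -> v1 = v2.
Proof.
move=> h; apply: nondeg => w.
by rewrite esym h -esym.
Qed.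

Definition adjP (T S : A * M -> A * M) := forall u v, ip (T u) v = ip u (S v).

Lemma adjD T S : adjP T S -> forall u1 u2, T (u1 + u2) = T u1 + T u2.
Proof. by move=> h u1 u2; apply: nondegl => w; rewrite eDl !h eDl. Qed.
Lemma adjZ T S : adjP T S -> forall c u, T (c *: u) = c *: T u.
Proof. by move=> h c u; apply: nondegl => w; rewrite eZl !h eZl. Qed.
Lemma adjR T S : adjP T S -> forall u b, T (rmul u b) = rmul (T u) b.
Proof. by move=> h u b; apply: nondegl => w; rewrite eRl !h eRl. Qed.
Lemma adj0 T S : adjP T S -> T 0 = 0.
Proof. by move=> h; apply: nondegl => w; rewrite h !e0l. Qed.
Lemma adjN T S : adjP T S -> forall u, T (- u) = - T u.
Proof. by move=> h u; apply: nondegl => w; rewrite h !eNl h. Qed.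
Lemma adj_sum T S : adjP T S -> forall I (r : seq I) (P : pred I) (F : I -> A * M),
  T (\sum_(i <- r | P i) F i) = \sum_(i <- r | P i) T (F i).
Proof. move=> h I r P F; exact: (big_morph T (adjD h) (adj0 h)). Qed.
Lemma adj_sym T S : adjP T S -> adjP S T.
Proof. by move=> h u v; rewrite esym -h -esym. Qed.

Definition gam (u : A * M) : A * M := (u.1, - u.2).
Lemma gD u v : gam (u + v) = gam u + gam v.
Proof. by apply: peq => //=; rewrite opprD. Qed.
Lemma gZ c u : gam (c *: u) = c *: gam u.
Proof. by apply: peq => //=; rewrite scalerN. Qed.
Lemma gK u : gam (gam u) = u.
Proof. by apply: peq => //=; rewrite opprK. Qed.
Lemma g0 : gam 0 = 0.
Proof. by apply: peq => //=; rewrite oppr0. Qed.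
Lemma gA u v : ip (gam u) v = ip u (gam v).
Proof. by rewrite /ipE /= iNl iNr. Qed.
Lemma g_sum I (r : seq I) (P : pred I) (F : I -> A * M) :
  gam (\sum_(i <- r | P i) F i) = \sum_(i <- r | P i) gam (F i).
Proof. by apply: (big_morph _ gD g0). Qed.

Lemma ptD x u v : pt x (u + v) = pt x u + pt x v.
Proof. by apply: peq => /=; rewrite ?mulrDr ?pDr. Qed.
Lemma ptZ x c u : pt x (c *: u) = c *: pt x u.
Proof. by apply: peq => /=; rewrite ?scalerAr ?pZr. Qed.
Lemma pt0 x : pt x 0 = 0.
Proof. by apply: peq => /=; rewrite ?mulr0 ?p0. Qed.
Lemma ptDx x y u : pt (x + y) u = pt x u + pt y u.
Proof. by apply: peq => /=; rewrite ?mulrDl ?pDl. Qed.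
Lemma ptZx c x u : pt (c *: x) u = c *: pt x u.
Proof. by apply: peq => /=; rewrite ?scalerAl ?pZl. Qed.
Lemma ptM x y u : pt (x * y) u = pt x (pt y u).
Proof. by apply: peq => /=; rewrite ?mulrA ?pM. Qed.
Lemma ptA x : adjP (pt x) (pt (star x)).
Proof. by move=> u v; rewrite /ipE /= sM mulrA pA. Qed.
Lemma ptg x u : gam (pt x u) = pt x (gam u).
Proof. by apply: peq => //=; rewrite pN. Qed.
Lemma pt_sum x I (r : seq I) (P : pred I) (F : I -> A * M) :
  pt x (\sum_(i <- r | P i) F i) = \sum_(i <- r | P i) pt x (F i).
Proof. exact: adj_sum (ptA x) _ _ _ _. Qed.

Definition h2 : R[i] := ((1 : R[i]) *+ 2)^-1.
Lemma h2h2 : h2 + h2 = 1.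
Proof. by rewrite /h2 -mulr2n -mulr_natr mulVf // pnatr_eq0. Qed.
Lemma halfK (V : lmodType R[i]) (v : V) : h2 *: v + h2 *: v = v.
Proof. by rewrite -scalerDl h2h2 scale1r. Qed.
Lemma h2c : h2^* = h2.
Proof. by rewrite /h2 fmorphV; congr (_^-1); apply: conjC_nat. Qed.
Lemma vanish (V : lmodType R[i]) (v : V) : v = - v -> v = 0.
Proof. by move=> h; rewrite -(halfK v) -scalerDr {2}h subrr scaler0. Qed.

Definition sgn (k : nat) : R[i] := (-1) ^+ k.
Lemma sgnc k : (sgn k)^* = sgn k.
Proof. by rewrite /sgn rmorphXn rmorphN1. Qed.
Lemma sgnD j n : (j <= n)%N -> sgn j * sgn (n - j) = sgn n.
Proof. by move=> h; rewrite /sgn -exprD subnKC. Qed.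
Lemma sgn2 k : sgn k * sgn k = 1.
Proof. by rewrite /sgn -exprMn mulrNN mulr1 expr1n. Qed.


Lemma triple (V : zmodType) n (G : nat -> nat -> nat -> V) :
  \sum_(j < n.+1) \sum_(a < j.+1) G a (j - a)%N (n - j)%N =
  \sum_(a < n.+1) \sum_(b < (n - a).+1) G a b (n - a - b)%N.
Proof.
transitivity (\sum_(j < n.+1) \sum_(a < n.+1) (if (a <= j)%N then G a (j - a)%N (n - j)%N else 0)).
  apply: eq_bigr => j _.
  rewrite (big_ord_widen_cond n.+1 xpredT (fun a : nat => G a (j - a)%N (n - j)%N)) //.
  by rewrite big_mkcond /=; apply: eq_bigr => a _; rewrite ltnS.
rewrite exchange_big /=; apply: eq_bigr => a _.
rewrite -big_mkcond /= (eq_bigl (fun j : 'I_n.+1 => xpredT j && (a <= j)%N)) // -(big_geq_mkord a n.+1 xpredT (fun j => G a (j - a)%N (n - j)%N)) -{1}(add0n a) big_addn.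
have ha : (a <= n)%N by rewrite -ltnS.
rewrite subSn // big_mkord; apply: eq_bigr => b _.
by rewrite addnK addnC subnDA.
Qed.

Definition Op := (A * M -> A * M)%type.
Definition b1 (x : A) (u : A * M) : A * M :=
  (ipM (delta (star x)) u.2, ract (delta x) u.1).

Definition Inv (k : nat) (b : A -> Op) :=
  [/\ (forall x y u, b (x + y) u = b x u + b y u),
      (forall c x u, b (c *: x) u = c *: b x u),
      (forall x, adjP (b x) (b (star x))) &
      (forall x u, gam (b x u) = sgn k *: b x (gam u))].

Definition MulAt (s : nat -> A -> Op) k :=
  forall x y u, s k (x * y) u = \sum_(j < k.+1) s j x (s (k - j)%N y u).

Definition trunc (s : nat -> A -> Op) n j : A -> Op :=
  if (j < n)%N then s j else fun _ _ => 0.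

Definition Phi (s : nat -> A -> Op) n x y u :=
  \sum_(j < n.+1) trunc s n j x (trunc s n (n - j)%N y u).

Section Inv.
Variables (k : nat) (b : A -> Op).
Hypothesis hb : Inv k b.
Lemma IDx x y u : b (x + y) u = b x u + b y u. Proof. by case: hb. Qed.
Lemma IZx c x u : b (c *: x) u = c *: b x u. Proof. by case: hb. Qed.
Lemma IA x : adjP (b x) (b (star x)). Proof. by case: hb. Qed.
Lemma IP x u : gam (b x u) = sgn k *: b x (gam u). Proof. by case: hb. Qed.
Lemma ID x u v : b x (u + v) = b x u + b x v. Proof. exact: (adjD (IA x) u v). Qed.
Lemma IZ x c u : b x (c *: u) = c *: b x u. Proof. exact: (adjZ (IA x) c u). Qed.
Lemma I0 x : b x 0 = 0. Proof. exact: adj0 (IA x). Qed.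
Lemma Isum x I (r : seq I) (P : pred I) (F : I -> A * M) :
  b x (\sum_(i <- r | P i) F i) = \sum_(i <- r | P i) b x (F i).
Proof. exact: adj_sum (IA x) _ _ _ _. Qed.
End Inv.

Lemma Inv0f k : Inv k (fun _ _ => 0).
Proof.
split=> //.
- by move=> *; rewrite addr0.
- by move=> *; rewrite scaler0.
- by move=> x u v; rewrite e0l e0r.
- by move=> *; rewrite g0 scaler0.
Qed.

Section PhiS.
Variables (s : nat -> A -> Op) (n : nat).
Hypothesis pre : forall k, (k < n)%N -> Inv k (s k).

Lemma tInv j : Inv j (trunc s n j).
Proof. by rewrite /trunc; case: ifP => h; [exact: pre | exact: Inv0f]. Qed.

Lemma Phi_adj x y : adjP (Phi s n x y) (Phi s n (star y) (star x)).
Proof.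
move=> u v; rewrite /Phi e_suml e_sumr.
rewrite [RHS](reindex_inj rev_ord_inj) /=.
apply: eq_bigr => j _; rewrite subSS.
rewrite (IA (tInv j)) (IA (tInv (n - j))) subKn //.
by rewrite -ltnS.
Qed.

Lemma Phi_Dx x1 x2 y u : Phi s n (x1 + x2) y u = Phi s n x1 y u + Phi s n x2 y u.
Proof. by rewrite /Phi -big_split; apply: eq_bigr => j _; rewrite (IDx (tInv j)). Qed.
Lemma Phi_Zx c x y u : Phi s n (c *: x) y u = c *: Phi s n x y u.
Proof. by rewrite /Phi scaler_sumr; apply: eq_bigr => j _; rewrite (IZx (tInv j)). Qed.
Lemma Phi_Dy x y1 y2 u : Phi s n x (y1 + y2) u = Phi s n x y1 u + Phi s n x y2 u.
Proof.
by rewrite /Phi -big_split; apply: eq_bigr => j _; rewrite (IDx (tInv _)) (ID (tInv j)).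
Qed.
Lemma Phi_Zy c x y u : Phi s n x (c *: y) u = c *: Phi s n x y u.
Proof.
by rewrite /Phi scaler_sumr; apply: eq_bigr => j _; rewrite (IZx (tInv _)) (IZ (tInv j)).
Qed.
Lemma Phi_D x y u v : Phi s n x y (u + v) = Phi s n x y u + Phi s n x y v.
Proof. exact: (adjD (Phi_adj x y) u v). Qed.
Lemma Phi_Z x y c u : Phi s n x y (c *: u) = c *: Phi s n x y u.
Proof. exact: (adjZ (Phi_adj x y) c u). Qed.

Lemma Phi_par x y u : gam (Phi s n x y u) = sgn n *: Phi s n x y (gam u).
Proof.
rewrite /Phi g_sum scaler_sumr; apply: eq_bigr => j _.
rewrite (IP (tInv j)) (IP (tInv _)) (IZ (tInv j)) scalerA sgnD //.
by rewrite -ltnS.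
Qed.

End PhiS.


Lemma zlem (V : zmodType) (a T S : V) : a - (T - S) + (T - a) - S = 0.
Proof. by rewrite opprB addrA addrC !addrA subrK addrC addrA subrK subrr. Qed.

Section Cocycle.
Variables (s : nat -> A -> Op) (n : nat).
Hypothesis pre : forall k, (k < n)%N -> Inv k (s k).
Hypothesis mul : forall k, (k < n)%N -> MulAt s k.
Hypothesis s0 : forall x u, s 0%N x u = pt x u.
Hypothesis n0 : (0 < n)%N.

Local Notation t := (trunc s n).

Lemma tmul j x y u : (j < n)%N ->
  t j (x * y) u = \sum_(a < j.+1) t a x (t (j - a)%N y u).
Proof.
move=> hj; rewrite /trunc hj (mul hj); apply: eq_bigr => a _.
have ha : (a < n)%N by apply: leq_ltn_trans hj; rewrite -ltnS.
have hja : (j - a < n)%N by apply: leq_ltn_trans hj; rewrite leq_subr.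
by rewrite ha hja.
Qed.
Lemma t0 x u : t 0%N x u = pt x u.
Proof. by rewrite /trunc n0 s0. Qed.
Lemma tn x u : t n x u = 0.
Proof. by rewrite /trunc ltnn. Qed.

Lemma cocycle x y z u :
  pt x (Phi s n y z u) - Phi s n (x * y) z u + Phi s n x (y * z) u
  - Phi s n x y (pt z u) = 0.
Proof.
pose G a b c := t a x (t b y (t c z u)).
have e1 : Phi s n (x * y) z u =
   \sum_(j < n.+1) \sum_(a < j.+1) G a (j - a)%N (n - j)%N - Phi s n x y (pt z u).
  rewrite big_ord_recr /= subnn /Phi [in LHS]big_ord_recr /= tn addr0 -addrA.
  rewrite [X in _ + X](_ : _ = 0) ?addr0; last first.
    by apply/eqP; rewrite subr_eq0; apply/eqP; apply: eq_bigr => a _; rewrite /G t0.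
  by apply: eq_bigr => j _; rewrite tmul.
have e2 : Phi s n x (y * z) u =
   \sum_(a < n.+1) \sum_(b < (n - a).+1) G a b (n - a - b)%N - pt x (Phi s n y z u).
  rewrite big_ord_recl /= subn0 /Phi [in LHS]big_ord_recl /= subn0 tn.
  rewrite (I0 (tInv pre 0%N)) add0r addrC addrA.
  rewrite [X in X + _](_ : _ = 0) ?add0r.
    apply: eq_bigr => i _; have -> : bump 0 i = i.+1 by []. rewrite tmul; last by rewrite ltn_subrL n0.
    rewrite (Isum (tInv pre _)); apply: eq_bigr => b _; done.
  rewrite pt_sum; apply/eqP; rewrite addrC subr_eq0; apply/eqP.
  by apply: eq_bigr => b _; rewrite /G t0.
by rewrite e1 e2 (triple n G) zlem.
Qed.

End Cocycle.


Lemma zlem2 (V : zmodType) (P G Q : V) : - G = - P - Q + (P - G + Q).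
Proof. by rewrite addrC addrAC !addrA subrK addrC addrA addNr add0r. Qed.
Lemma zAC (V : zmodType) (P Q F W2 W3 : V) : P + Q + F + (W2 + W3) = P + W2 + (Q + W3) + F.
Proof. by rewrite -[LHS]addrA [F + _]addrC addrA addrACA. Qed.
Lemma zlem3 (V : zmodType) (a b c d P : V) : (a + b + P) - (c + d + P) = (a - c) + (b - d).
Proof. by rewrite opprD addrACA subrr addr0 opprD addrACA. Qed.

Lemma mix (V : lmodType R[i]) (a b c a' b' : V) :
  h2 *: ((a + b + c) + (a' + b' + c)) = h2 *: (a + a') + h2 *: (b + b') + c.
Proof.
by rewrite addrACA [a + b + (a' + b')]addrACA !scalerDr halfK.
Qed.

Section Step.
Variables (s : nat -> A -> Op) (n : nat).
Hypothesis pre : forall k, (k < n)%N -> Inv k (s k).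
Hypothesis mul : forall k, (k < n)%N -> MulAt s k.
Hypothesis hs0 : forall x u, s 0%N x u = pt x u.
Hypothesis hs1 : forall x u, s 1%N x u = b1 x u.
Hypothesis n2 : (1 < n)%N.

Definition EqP (b : A -> Op) :=
  forall x y u, b (x * y) u = pt x (b y u) + b x (pt y u) + Phi s n x y u.

Lemma n0 : (0 < n)%N. Proof. exact: ltnW. Qed.

Lemma c_exists : exists c : A -> Op,
  [/\ (forall x y u, c (x + y) u = c x u + c y u),
      (forall k x u, c (k *: x) u = k *: c x u),
      (forall x, exists S, adjP (c x) S) & EqP c].
Proof.
have [g [gA [gD [gZ geq]]]] := HH2 (f := Phi s n)
  (fun x y => ex_intro _ _ (Phi_adj pre x y)) (Phi_Dx pre) (Phi_Zx pre)
  (Phi_Dy pre) (Phi_Zy pre) (cocycle pre mul hs0 n0).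
exists (fun x u => - g x u); split.
- by move=> x y u; rewrite gD opprD.
- by move=> k x u; rewrite gZ scalerN.
- move=> x; have [S hS] := gA x; exists (fun v => - S v) => u v.
  by rewrite eNl eNr hS.
- move=> x y u; rewrite geq.
  have hN : forall w, pt x (- w) = - pt x w.
    by move=> w; rewrite -scaleN1r ptZ scaleN1r.
  by rewrite hN; exact: zlem2.
Qed.


Lemma d_exists : exists d : A -> Op,
  [/\ (forall x y u, d (x + y) u = d x u + d y u),
      (forall k x u, d (k *: x) u = k *: d x u),
      (forall x, adjP (d x) (d (star x))) & EqP d].
Proof.
have [c [cD cZ cA ceq]] := c_exists.
pose S x := epsilon (inhabits (fun u : A * M => u)) (fun S => adjP (c x) S).
have HS x : adjP (c x) (S x) by apply: epsilon_spec; exact: cA.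
have HS' x w v : ip w (S x v) = ip (c x w) v by rewrite HS.
have SD x1 x2 v : S (star (x1 + x2)) v = S (star x1) v + S (star x2) v.
  by apply: nondeg => w; rewrite HS' sD cD eDl eDr !HS'.
have SZ k x v : S (star (k *: x)) v = k *: S (star x) v.
  by apply: nondeg => w; rewrite HS' sZ cZ eZl conjCK eZr HS'.
have Seq x y v : S (star (x * y)) v = pt x (S (star y) v) + S (star x) (pt y v) + Phi s n x y v.
  apply: nondeg => w; rewrite HS' sM ceq !eDl !eDr ptA (HS (star x)) sK.
  rewrite (Phi_adj pre) !sK; congr (_ + _); rewrite addrC; congr (_ + _).
  by rewrite -HS' ptA sK.
exists (fun x u => h2 *: (c x u + S (star x) u)); split.
- by move=> x y u; rewrite cD SD addrACA scalerDr.
- by move=> k x u; rewrite cZ SZ -scalerDr !scalerA mulrC.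
- move=> x u v; rewrite eZl h2c eDl eZr eDr sK HS.
  rewrite (adj_sym (HS (star x))); congr (_ *: _); exact: addrC.
- move=> x y u; rewrite ceq Seq mix ptZ ptD scalerDr; congr (_ + _ + _).
Qed.


Lemma e_exists : exists e : A -> Op, Inv n e /\ EqP e.
Proof.
have [d [dD dZ dA deq]] := d_exists.
exists (fun x u => h2 *: (d x u + sgn n *: gam (d x (gam u)))); split; first split.
- by move=> x y u; rewrite !dD gD [sgn n *: _]scalerDr addrACA scalerDr.
- by move=> k x u; rewrite !dZ gZ scalerA mulrC -scalerA -scalerDr !scalerA mulrC.
- move=> x u v; rewrite eZl h2c eDl eZl sgnc (gA (d x (gam u)) v) !dA (gA u) eZr eDr eZr. done.
- move=> x u; rewrite gZ gD gZ gK scalerA [_ * h2]mulrC -scalerA; congr (_ *: _).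
  by rewrite scalerDr scalerA sgn2 scale1r gK addrC.
- move=> x y u; rewrite deq [d (x * y) _]deq !gD ptg -[pt y (gam u)]ptg (Phi_par pre) gK.
  by rewrite [sgn n *: (_ + _ + _)]scalerDr [sgn n *: (_ + _)]scalerDr scalerA sgn2 scale1r -ptZ mix -ptD -ptZ.
Qed.


Definition Good (b : A -> Op) :=
  [/\ Inv n b, EqP b & (n = 2%N -> forall x, (b x (1, 0)).1 = L x)].

Lemma good_exists : exists b, Good b.
Proof.
have [e [eI eeq]] := e_exists.
case: (n =P 2%N) => [n2eq | nne]; last by exists e; split.
pose e00 x := (e x (1, 0)).1.
have eR x y : (e x (y, 0)).1 = e00 x * y.
  have -> : (y, 0) = rmul (1, 0) y :> A * M by apply: peq; rewrite /= ?mul1r ?r0l.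
  by rewrite (adjR (IA eI x)).
have ePhi x y : (Phi s n x y (1, 0)).1 = ipM (delta (star x)) (delta y).
  rewrite /Phi n2eq !big_ord_recr big_ord0 /= add0r /trunc /=.
  by rewrite hs0 !hs1 /= mulr0 r1 add0r addr0.
have estar x : star (e00 x) = e00 (star x).
  have := IA eI x (1, 0) (1, 0); rewrite /ipE /= mulr1 i0r i0l !addr0 s1 mul1r.
  by [].
pose D x := L x - e00 x.
have Dder x y : D (x * y) = x * D y + D x * y.
  have h := congr1 fst (eeq x y (1, 0)); rewrite /pit /= mulr1 p0 (eR x y) ePhi in h.
  have hL : L (x * y) = x * L y + L x * y + ipM (delta (star x)) (delta y).
    by rewrite -HLd addrC -[L (x * y) - _ - _]addrA -opprD subrK.
  by rewrite /D hL /e00 h zlem3 mulrBr mulrBl.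
have DD x y : D (x + y) = D x + D y.
  by rewrite /D /e00 LD (IDx eI) /= opprD addrACA.
have DZ k x : D (k *: x) = k *: D x.
  by rewrite /D /e00 LZ (IZx eI) /= scalerBr.
have Dstar x : star (D x) = D (star x).
  by rewrite /D sB -HLs estar.
have sg1 : sgn n = 1 by rewrite n2eq /sgn expr2 mulrNN mulr1.
exists (fun x u => e x u + (D x * u.1, 0)); split; first split.
- move=> x y u; apply: peq => /=.
    by rewrite (IDx eI) DD mulrDl addrACA.
  by rewrite (IDx eI) !addr0.
- move=> k x u; apply: peq => /=.
    by rewrite (IZx eI) DZ -scalerAl scalerDr.
  by rewrite (IZx eI) !addr0.
- move=> x u v; rewrite eDl eDr (IA eI); congr (_ + _).
  by rewrite /ipE /= sM i0l i0r Dstar mulrA.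
- move=> x u; rewrite gD (IP eI) sg1 !scale1r; congr (_ + _).
  by apply: peq => //=; rewrite oppr0.
- move=> x y u; rewrite eeq ptD.
  have W : (D (x * y) * u.1, 0) = pt x (D y * u.1, 0) + (D x * (pt y u).1, 0) :> A * M.
    by apply: peq => /=; [rewrite Dder mulrDl !mulrA | rewrite p0 addr0].
  by rewrite W; exact: zAC.
- by move=> _ x; rewrite /= mulr1 /D addrC subrK.
Qed.

End Step.


Definition step (s : nat -> A -> Op) (n : nat) : A -> Op :=
  match n with
  | 0 => fun x u => pt x u
  | 1 => b1
  | _ => epsilon (inhabits (fun _ _ => 0)) (Good s n)
  end.

Fixpoint pref (m : nat) : nat -> A -> Op :=
  match m with
  | 0 => fun _ x u => pt x u
  | m'.+1 => fun k => if k == m'.+1 then step (pref m') m'.+1 else pref m' k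
  end.

Definition beta n := pref n n.

Lemma pref_stable m k : (k <= m)%N -> pref m k = beta k.
Proof.
elim: m => [|m IH]; first by rewrite leqn0 => /eqP ->.
rewrite leq_eqVlt => /orP [/eqP -> // | hk].
by rewrite /= (ltn_eqF hk) IH.
Qed.

Lemma beta_step n : beta n.+1 = step (pref n) n.+1.
Proof. by rewrite /beta /= eqxx. Qed.

Lemma Phi_ext s t n : (forall k, (k < n)%N -> s k = t k) ->
  forall x y u, Phi s n x y u = Phi t n x y u.
Proof.
move=> h x y u; rewrite /Phi; apply: eq_bigr => j _.
have hh i : trunc s n i = trunc t n i by rewrite /trunc; case: ifP => // /h ->.
by rewrite !hh.
Qed.

Lemma MulAt_ext s t k : (forall j, (j <= k)%N -> s j = t j) -> MulAt t k -> MulAt s k.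
Proof.
move=> h m x y u; rewrite h // m; apply: eq_bigr => j _.
by rewrite !h // ?leq_subr // -ltnS.
Qed.

Lemma sum_split s m x y u : (forall x u, s 0%N x u = pt x u) ->
  \sum_(j < m.+2) s j x (s (m.+1 - j)%N y u) =
  pt x (s m.+1 y u) + s m.+1 x (pt y u) + Phi s m.+1 x y u.
Proof.
move=> hs0; rewrite big_ord_recr /= big_ord_recl /Phi big_ord_recr /= big_ord_recl /= !subn0 subnn.
rewrite /trunc ltnn ltn0Sn !hs0 pt0 add0r addr0 addrAC; congr (_ + _).
apply: eq_bigr => i _; have -> : bump 0 i = i.+1 by [].
by rewrite subSS ltnS ltn_ord ltnS leq_subr.
Qed.


Lemma rZl c xi a : ract (c *: xi) a = c *: ract xi a.
Proof. by case: HPH => _ [_ []]. Qed.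

Lemma Inv_pt : Inv 0 (fun x u => pt x u).
Proof.
split.
- exact: ptDx.
- exact: ptZx.
- exact: ptA.
- by move=> x u; rewrite /sgn expr0 scale1r ptg.
Qed.

Lemma Inv_b1 : Inv 1 b1.
Proof.
split.
- by move=> x y u; apply: peq => /=; rewrite ?sD ?dD ?iDl ?rDl.
- by move=> k x u; apply: peq => /=; rewrite ?sZ ?dZ ?iZl ?conjCK ?rZl.
- move=> x u v; rewrite /ipE /= sK -iS iRl iRr addrC; done.
- by move=> x u; rewrite /sgn expr1 scaleN1r; apply: peq => /=; rewrite ?iNr ?opprK.
Qed.

Lemma beta_all n : [/\ Inv n (beta n), MulAt beta n &
  (n = 2%N -> forall x, (beta n x (1, 0)).1 = L x)].
Proof.
elim/ltn_ind: n => -[|[|n]] IH.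
- split => //; first exact: Inv_pt.
  by move=> x y u; rewrite big_ord1 /beta /= ptM.
- split => //; first exact: Inv_b1.
  move=> x y u; rewrite big_ord_recr big_ord1 /= /beta /=.
  apply: peq => /=.
    rewrite sM dL iDl pA sK iRl sK addrC; done.
  by rewrite dL rDl pR rM.
set s := pref n.+1.
have hs k : (k <= n.+1)%N -> s k = beta k by exact: pref_stable.
have pre k : (k < n.+2)%N -> Inv k (s k).
  by move=> hk; rewrite hs //; case: (IH k hk).
have mul k : (k < n.+2)%N -> MulAt s k.
  move=> hk; case: (IH k hk) => _ mk _; apply: MulAt_ext mk => j hj.
  by apply: hs; apply: leq_trans hj _; rewrite -ltnS.
have hs0 x u : s 0%N x u = pt x u by rewrite hs.
have hs1 x u : s 1%N x u = b1 x u by rewrite hs.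
have [b Gb] := good_exists pre mul hs0 hs1 (isT : (1 < n.+2)%N).
have : Good s n.+2 (beta n.+2).
  rewrite beta_step /=; apply: epsilon_spec; by exists b.
case=> I E L2; split => //.
move=> x y u; rewrite E sum_split // (Phi_ext (t := beta)) // => k hk.
Qed.


Lemma sgn_even k : sgn (2 * k) = 1.
Proof. by rewrite /sgn exprM expr2 mulrNN mulr1 expr1n. Qed.
Lemma sgn_odd k : sgn (2 * k).+1 = -1.
Proof. by rewrite /sgn exprS -/(sgn _) sgn_even mulr1. Qed.

Lemma par_even k b x xi : Inv (2 * k) b ->
  (b x (1, 0)).2 = 0 /\ (b x (0, xi)).1 = 0.
Proof.
move=> I; split.
  have := IP I x (1, 0); rewrite sgn_even scale1r /gam /= oppr0 => /(congr1 snd) /=.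
  by move=> h; apply: vanish; rewrite -h opprK.
have := IP I x (0, xi); rewrite sgn_even scale1r.
have -> : gam (0, xi) = - (0, xi) :> A * M by apply: peq; rewrite /= ?oppr0.
rewrite (adjN (IA I x)) => /(congr1 fst) /= h.
exact: vanish.
Qed.

Lemma par_odd k b x xi : Inv (2 * k).+1 b ->
  (b x (1, 0)).1 = 0 /\ (b x (0, xi)).2 = 0.
Proof.
move=> I; split.
  have := IP I x (1, 0); rewrite sgn_odd scaleN1r /gam /= oppr0 => /(congr1 fst) /=.
  by move=> h; apply: vanish.
have := IP I x (0, xi); rewrite sgn_odd scaleN1r.
have -> : gam (0, xi) = - (0, xi) :> A * M by apply: peq; rewrite /= ?oppr0.
rewrite (adjN (IA I x)) opprK => /(congr1 snd) /= h.
by apply: vanish; rewrite -h opprK.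
Qed.

Lemma main_result :
  exists (beta : nat -> A -> (A * M -> A * M))
         (theta00 : nat -> A -> A) (theta10 : nat -> A -> M)
         (theta01 : nat -> A -> (M -> A)) (theta11 : nat -> A -> (M -> M)),
    star_hom_series star ipM beta /\
    (forall n, linear_on (theta00 n)) /\
    (forall n, linear_on (theta10 n)) /\
    (forall n, linear_on_fun (theta01 n)) /\
    (forall n, linear_on_fun (theta11 n)) /\
    (forall (k : nat) x,
        entry00 (beta (2 * k)%N x) = theta00 k x /\
        (forall xi, entry11 (beta (2 * k)%N x) xi = theta11 k.+1 x xi) /\
        entry10 (beta (2 * k)%N x) = 0 /\
        (forall xi, entry01 (beta (2 * k)%N x) xi = 0)) /\
    (forall (k : nat) x,
        entry10 (beta (2 * k).+1 x) = theta10 k.+1 x /\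
        (forall xi, entry01 (beta (2 * k).+1 x) xi = theta01 k.+1 x xi) /\
        entry00 (beta (2 * k).+1 x) = 0 /\
        (forall xi, entry11 (beta (2 * k).+1 x) xi = 0)) /\
    (forall x, theta00 0%N x = x) /\
    (forall x, theta00 1%N x = L x) /\
    (forall x, theta10 1%N x = delta x) /\
    (forall x xi, theta01 1%N x xi = ipM (delta (star x)) xi) /\
    (forall x xi, theta11 1%N x xi = pi x xi).
Proof.
exists beta, (fun k x => (beta (2 * k) x (1, 0)).1),
  (fun k x => (beta (2 * k.-1).+1 x (1, 0)).2),
  (fun k x xi => (beta (2 * k.-1).+1 x (0, xi)).1),
  (fun k x xi => (beta (2 * k.-1) x (0, xi)).2).
have I n := (let: And3 i _ _ := beta_all n in i).
split.
  split=> n; first by case: (beta_all n).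
  by move=> x u v; exact: (IA (I n)).
split; first by move=> n; split=> *; rewrite ?(IDx (I _)) ?(IZx (I _)).
split; first by move=> n; split=> *; rewrite ?(IDx (I _)) ?(IZx (I _)).
split; first by move=> n; split=> *; rewrite ?(IDx (I _)) ?(IZx (I _)).
split; first by move=> n; split=> *; rewrite ?(IDx (I _)) ?(IZx (I _)).
split.
  move=> k x; split => //; split => //.
  by have [h1 h2] := par_even x 0 (I (2 * k)%N); split => // xi; case: (par_even x xi (I (2 * k)%N)).
split.
  move=> k x; split => //; split => //.
  by have [h1 h2] := par_odd x 0 (I (2 * k).+1); split => // xi; case: (par_odd x xi (I (2 * k).+1)).
split; first by move=> x; rewrite /beta /= mulr1.
split; first by move=> x; case: (beta_all 2) => _ _; apply.
split; first by move=> x; rewrite /beta /= /b1 /= r1.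
by split.
Qed.

End Main.

Theorem theorem3p1
    (R : realType) (A : algType R[i]) (star : A -> A)
    (H : lmodType R[i]) (ipH : H -> H -> R[i]) (rho : A -> H -> H)
    (L : A -> A)
    (M : lmodType R[i]) (ract : M -> A -> M) (ipM : M -> M -> A)
    (pi : A -> M -> M) (delta : A -> M) :
  (* A is a unital *-subalgebra of B(H) *)
  is_involution star ->
  is_inner_product ipH ->
  is_faithful_bounded_star_rep star ipH rho ->
  (* L is linear, conditionally completely positive, L(1) = 0 *)
  linear_on L ->
  cond_completely_positive star ipH rho L ->
  L 1 = 0 ->
  (* (M, pi, delta) is the canonical bimodule / derivation of L *)
  is_preHilbert_module star ipH rho ract ipM ->
  is_left_action star ract ipM pi ->
  is_generating_derivation ract pi delta ->
  (forall x y, L (x * y) - x * L y - L x * y = ipM (delta (star x)) (delta y)) ->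
  (* H^2(A, E_L) = 0 *)
  H2_vanishes star ipM pi ->
  exists (beta : nat -> A -> (A * M -> A * M))
         (theta00 : nat -> A -> A) (theta10 : nat -> A -> M)
         (theta01 : nat -> A -> (M -> A)) (theta11 : nat -> A -> (M -> M)),
    (* beta : A -> E_L[[t]] is a *-homomorphism *)
    star_hom_series star ipM beta /\
    (* the theta's are linear maps on A *)
    (forall n, linear_on (theta00 n)) /\
    (forall n, linear_on (theta10 n)) /\
    (forall n, linear_on_fun (theta01 n)) /\
    (forall n, linear_on_fun (theta11 n)) /\
    (* coefficient of t^(2k) = h^k : block diagonal *)
    (forall (k : nat) x,
        entry00 (beta (2 * k)%N x) = theta00 k x /\
        (forall xi, entry11 (beta (2 * k)%N x) xi = theta11 k.+1 x xi) /\
        entry10 (beta (2 * k)%N x) = 0 /\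
        (forall xi, entry01 (beta (2 * k)%N x) xi = 0)) /\
    (* coefficient of t^(2k+1) = h^((2(k+1)-1)/2) : block off-diagonal *)
    (forall (k : nat) x,
        entry10 (beta (2 * k).+1 x) = theta10 k.+1 x /\
        (forall xi, entry01 (beta (2 * k).+1 x) xi = theta01 k.+1 x xi) /\
        entry00 (beta (2 * k).+1 x) = 0 /\
        (forall xi, entry11 (beta (2 * k).+1 x) xi = 0)) /\
    (* prescribed lowest-order terms *)
    (forall x, theta00 0%N x = x) /\
    (forall x, theta00 1%N x = L x) /\
    (forall x, theta10 1%N x = delta x) /\
    (forall x xi, theta01 1%N x xi = ipM (delta (star x)) xi) /\
    (forall x xi, theta11 1%N x xi = pi x xi).
Proof.
move=> Hinv _ _ HL Hcc _ HPH Hleft Hgen HLd HH2.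
exact: (main_result Hinv HPH Hleft Hgen HL (proj1 Hcc) HLd HH2).
Qed.
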